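(* Let $X$ be a multiset of nonzero real numbers containing at least one positive and one negative number, and let $T$ be an addition tree over $X$. Let $y_1,\dots,y_{2k}$ be the critical leaves of $T$, indexed so that $y_{2i-1}$ and $y_{2i}$ are siblings, and let $z_1,\dots,z_{n-2k}$ be the noncritical leaves. Let $\Pi=\sum_{i=1}^k|y_{2i-1}+y_{2i}|$ and $\Delta=\sum_{j=1}^{n-2k}|z_j|$. Then $C(T)\ge(\Pi+\Delta)/2$.
   Context: An addition tree over a multiset $X=\{x_1,\dots,x_n\}$ is a full binary tree with $n$ leaves labeled by the elements of $X$ (each used once), each internal node having value equal to the sum of its children's values; $C(T)$ is the sum of the absolute values of the internal node values. A leaf is critical if its sibling is a leaf of the opposite sign (so critical leaves come in sibling pairs). *)

(* Defs.v *)
From mathcomp Require Import all_boot all_order all_algebra.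
Set Implicit Arguments. Unset Strict Implicit. Unset Printing Implicit Defensive.
Import Order.TTheory GRing.Theory Num.Theory.
Local Open Scope ring_scope.

Inductive atree (R : Type) : Type :=
| Leaf of R
| Node of atree R & atree R.
Arguments Leaf {R}.
Arguments Node {R}.

Section AdditionTree.
Variable R : realFieldType.

Fixpoint leaves (T : atree R) : seq R :=
  match T with Leaf x => [:: x] | Node l r => leaves l ++ leaves r end.

Fixpoint tval (T : atree R) : R :=
  match T with Leaf x => x | Node l r => tval l + tval r end.

Fixpoint cost (T : atree R) : R :=
  match T with Leaf _ => 0 | Node l r => `|tval l + tval r| + cost l + cost r end.

Definition opp_sign (a b : R) : bool := ((a < 0) && (0 < b)) || ((b < 0) && (0 < a)).

Fixpoint crit_pairs (T : atree R) : seq (R * R) :=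
  match T with
  | Leaf _ => [::]
  | Node (Leaf a) (Leaf b) => if opp_sign a b then [:: (a, b)] else [::]
  | Node l r => crit_pairs l ++ crit_pairs r
  end.

Fixpoint noncrit_leaves (T : atree R) : seq R :=
  match T with
  | Leaf x => [:: x]
  | Node (Leaf a) (Leaf b) => if opp_sign a b then [::] else [:: a; b]
  | Node l r => noncrit_leaves l ++ noncrit_leaves r
  end.

Definition Pi (T : atree R) : R := \sum_(p <- crit_pairs T) `|p.1 + p.2|.
Definition Delta (T : atree R) : R := \sum_(z <- noncrit_leaves T) `|z|.

End AdditionTree.

(* Main.v *)
Require Import Defs.
From mathcomp Require Import all_boot all_order all_algebra.
From mathcomp Require Import lra.
Import Order.TTheory GRing.Theory Num.Theory.
Local Open Scope ring_scope.

Definition isleaf {R : Type} (T : atree R) := if T is Leaf _ then true else false.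

Lemma Pi_node (R : realFieldType) (l r : atree R) : ~~ (isleaf l && isleaf r) ->
  Pi (Node l r) = Pi l + Pi r /\ Delta (Node l r) = Delta l + Delta r.
Proof.
move=> h; rewrite /Pi /Delta -!big_cat.
by case: l h => [a|l1 l2]; case: r => [b|r1 r2].
Qed.

Lemma tri1 (R : realFieldType) (u b : R) : `|b| <= `|u + b| + `|u|.
Proof. by have := ler_normB (u + b) u; rewrite addrC addKr. Qed.

Lemma tri2 (R : realFieldType) (u b : R) : `|b| <= `|b + u| + `|u|.
Proof. by rewrite (addrC b u); apply: tri1. Qed.

Lemma PiL (R : realFieldType) (a : R) : Pi (Leaf a) = 0.
Proof. by rewrite /Pi big_nil. Qed.
Lemma DeltaL (R : realFieldType) (a : R) : Delta (Leaf a) = `|a|.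
Proof. by rewrite /Delta big_seq1. Qed.
Lemma cost0 (R : realFieldType) (a : R) : cost (Leaf a) = 0.
Proof. by []. Qed.

Lemma key (R : realFieldType) (T : atree R) :
  Pi T + Delta T + `|Defs.tval T| <= 2 * cost T + (match T with Leaf x => 2 * `|x| | _ => 0 end).
Proof.
elim: T => [x|l IHl r IHr].
  rewrite /Pi /Delta /= big_nil big_seq1 /=. lra.
have -> : cost (Node l r) = `|Defs.tval l + Defs.tval r| + cost l + cost r by [].
have -> : Defs.tval (Node l r) = Defs.tval l + Defs.tval r by [].
rewrite addr0.
case E: (isleaf l && isleaf r).
  case: l E {IHl} => [a|//]; case: r {IHr} => [b|//] _.
  rewrite /Pi /Delta /=; case: ifP => hop.
    rewrite big_seq1 big_nil /=. lra.
  rewrite big_nil big_cons big_seq1 /=.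
  have -> : `|a + b| = `|a| + `|b|.
    move: hop; rewrite /opp_sign => /negbT.
    rewrite negb_or !negb_and -!leNgt.
    case/andP=> /orP[ha|hb] /orP[hb'|ha'].
    - by rewrite !ger0_norm ?addr_ge0.
    - have -> : a = 0 by apply/eqP; rewrite eq_le ha ha'.
      by rewrite normr0 !add0r.
    - have -> : b = 0 by apply/eqP; rewrite eq_le hb hb'.
      by rewrite normr0 !addr0.
    - rewrite !ler0_norm ?addr_le0 //; lra.
  lra.
have [-> ->] := Pi_node _ _ _ (negbT E).
have := normr_ge0 (Defs.tval l + Defs.tval r).
have n1 := ler_normD (Defs.tval l) (Defs.tval r).
case: l E IHl n1 => [a|l1 l2] E IHl n1; case: r E IHr n1 => [b|r1 r2] E IHr n1 //.
- have := @tri2 R (Defs.tval (Node r1 r2)) a.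
  move: IHl IHr n1; rewrite !PiL !DeltaL !cost0 /=. lra.
- have := @tri1 R (Defs.tval (Node l1 l2)) b.
  move: IHl IHr n1; rewrite !PiL !DeltaL !cost0 /=. lra.
- move: IHl IHr n1. lra.
Qed.

Theorem lemma3p1 (R : realFieldType) (T : atree R) :
  (forall x, x \in leaves T -> x != 0) ->
  (exists2 x, x \in leaves T & 0 < x) ->
  (exists2 x, x \in leaves T & x < 0) ->
  (Pi T + Delta T) / 2 <= cost T.
Proof.
move=> _ [x hx px] [y hy ny].
case: T hx hy => [z|l r] hx hy.
  move: hx hy; rewrite /= !inE => /eqP e1 /eqP e2; subst; lra.
have := @key R (Node l r); have := normr_ge0 (Defs.tval (Node l r)). lra.
Qed.
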